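(* Let $I\ge1$, $\eta>0$, $\lambda^*\in(0,\infty)^I$, $\alpha\in(0,\infty)^I$, $\hat\alpha=\sum_{i=1}^I1/\alpha_i$, $h_0\ge0$ and $h_1,\dots,h_I$ with $h_i>h_0$ for all $i$, $c\in\mathbb{R}_+^I$, and set $h=\min_i h_i-h_0$ and $r=\min_i c_i/\lambda_i^*$. Let $\chi$ be a one-dimensional Brownian motion with drift $a$, variance $\sigma^2$ and $\chi(0)\ge0$. (RBCP) A policy is a triple $(Z,U,\zeta)$ of $I$-dimensional processes nonanticipating with respect to $\chi$ such that, with $W(t)=\sum_{i=1}^IZ_i(t)$, $$W(t)=\chi(t)-\eta\int_0^tW(s)ds-\int_0^t\sum_{i=1}^I\zeta_i(s)ds+\sum_{i=1}^I\lambda_i^*U_i(t),\quad t\ge0,$$ $Z(t)\ge0$ for $t\ge0$, and $U$ is nondecreasing with $U(0)=0$; its cost is $\limsup_{t\to\infty}\frac1tE[\int_0^t(\sum_i\alpha_i\zeta_i(s)^2+\sum_i(h_i-h_0)Z_i(s))ds+c'U(t)]$. (EWF) A policy is a real-valued process $\theta$ nonanticipating with respect to $\chi$ such that, for some process $L$ that is nondecreasing with $L(0)=0$, the process $W(t)=\chi(t)-\eta\int_0^tW(s)ds-\int_0^t\theta(s)ds+L(t)$ satisfies $W(t)\ge0$ for $t\ge0$; its cost is $\limsup_{t\to\infty}\frac1tE[\int_0^t(\theta(s)^2/\hat\alpha+hW(s))ds+rL(t)]$. Then every admissible policy $\theta$ for the EWF yields an admissible policy $(Z,U,\zeta)$ for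 the RBCP with the same cost; and for every admissible policy $(Z,U,\zeta)$ of the RBCP there exists an admissible policy $\theta$ for the EWF whose cost is less than or equal to that of $(Z,U,\zeta)$ for the RBCP. *)

(* Defs.v *)
From HB Require Import structures.
From mathcomp Require Import all_boot all_order all_algebra.
From mathcomp Require Import all_classical all_reals all_analysis.
From mathcomp Require Import normal_distribution.

Set Implicit Arguments.
Unset Strict Implicit.
Unset Printing Implicit Defensive.

Import Order.TTheory GRing.Theory Num.Theory.
Import numFieldNormedType.Exports.

Local Open Scope classical_set_scope.
Local Open Scope ring_scope.

Section Defs.
Context {R : realType} {d : measure_display} {Omega : measurableType d}.

(* A (real-valued, time-indexed) process: time t : R (only t >= 0 matters). *)
Definition process := R -> Omega -> R.

Definition chi_gen (chi : process) (t : R) : set (set Omega) :=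
  [set A | exists s B, [/\ 0 <= s <= t, measurable B & A = chi s @^-1` B]].

Definition chi_filt (chi : process) (t : R) : set (set Omega) :=
  <<s chi_gen chi t >>.

(* Nonanticipating with respect to chi: progressively measurable with respect
   to the natural filtration of chi, i.e. for every t >= 0 the map
   (s, w) |-> X s w on [0,t] x Omega is B(R) (x) F_t-measurable. *)
Definition nonanticipating (chi : process) (X : process) : Prop :=
  forall t : R, 0 <= t -> forall B : set R, measurable B ->
    <<s [set E : set (R * Omega) | exists A F,
           [/\ measurable A, chi_filt chi t F & E = A `*` F]] >>
      [set p : R * Omega | 0 <= p.1 <= t /\ B (X p.1 p.2)].

(* chi is a one-dimensional Brownian motion with drift a, variance sigma^2
   (sigma > 0 is the standard deviation per unit time), started at a
   nonnegative (possibly random) value chi(0). *)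
Definition brownian_motion (P : probability Omega R) (chi : process) (a sigma : R)
    : Prop :=
  [/\ forall w, 0 <= chi 0 w,
      forall t, measurable_fun setT (chi t),
      forall w, {within [set t : R | 0 <= t], continuous (fun t => chi t w)},
      forall s t, 0 <= s -> s < t -> forall B : set R, measurable B ->
        P ((fun w => chi t w - chi s w) @^-1` B)
        = normal_prob (a * (t - s)) (sigma * Num.sqrt (t - s)) B
    &
      forall s t, 0 <= s -> s < t -> forall B : set R, measurable B ->
      forall A, chi_filt chi s A ->
        P ((fun w => (chi t w - chi s w)%R) @^-1` B `&` A)
        = (P ((fun w => (chi t w - chi s w)%R) @^-1` B) * P A)%E].

Definition pint (X : process) (t : R) (w : Omega) : R :=
  Rintegral lebesgue_measure `[0, t] (fun s => X s w).

Definition loc_integrable (X : process) : Prop :=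
  forall w t, 0 <= t ->
    lebesgue_measure.-integrable `[0, t] (fun s => (X s w)%:E).

Definition nondecr_from0 (X : process) : Prop :=
  (forall w, X 0 w = 0) /\
  (forall w s t, 0 <= s -> s <= t -> X s w <= X t w).

Definition limsup_oo (f : R -> \bar R) : \bar R :=
  limf_esup f (pinfty_nbhs R).

Variable n : nat. (* I = n.+1 >= 1 classes, indexed by 'I_n.+1 *)

Definition rbcp_admissible (chi : process) (eta : R) (lam : 'I_n.+1 -> R)
    (Z U zeta : 'I_n.+1 -> process) : Prop :=
  let W := fun s w => \sum_(i < n.+1) Z i s w in
  [/\ (forall i, nonanticipating chi (Z i)) /\
        (forall i, nonanticipating chi (U i)) /\
        (forall i, nonanticipating chi (zeta i)),
      (loc_integrable W /\ (forall i, loc_integrable (zeta i))),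
      forall w t, 0 <= t ->
        W t w = chi t w - eta * pint W t w
                - pint (fun s w => \sum_(i < n.+1) zeta i s w) t w
                + \sum_(i < n.+1) lam i * U i t w,
      forall i w t, 0 <= t -> 0 <= Z i t w
    & forall i, nondecr_from0 (U i)].

Definition rbcp_cost (P : probability Omega R) (alpha hh : 'I_n.+1 -> R) (h0 : R)
    (c : 'I_n.+1 -> R) (Z U zeta : 'I_n.+1 -> process) : \bar R :=
  limsup_oo (fun t =>
    (t^-1)%:E *
    \int[P]_w ((\int[lebesgue_measure]_(s in `[0%R, t])
                  (\sum_(i < n.+1) alpha i * zeta i s w ^+ 2
                   + \sum_(i < n.+1) (hh i - h0) * Z i s w)%R%:E)
               + (\sum_(i < n.+1) c i * U i t w)%R%:E))%E.

(* An EWF policy theta, together with the process L (required nondecreasing,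
   L(0)=0, nonanticipating) and the resulting workload W. *)
Definition ewf_admissible (chi : process) (eta : R) (theta L W : process) : Prop :=
  [/\ nonanticipating chi theta /\ nonanticipating chi L,
      (loc_integrable W /\ loc_integrable theta),
      forall w t, 0 <= t ->
        W t w = chi t w - eta * pint W t w - pint theta t w + L t w,
      forall w t, 0 <= t -> 0 <= W t w
    & nondecr_from0 L].

Definition ewf_cost (P : probability Omega R) (ahat h r : R) (theta L W : process)
    : \bar R :=
  limsup_oo (fun t =>
    (t^-1)%:E *
    \int[P]_w ((\int[lebesgue_measure]_(s in `[0%R, t])
                  (theta s w ^+ 2 / ahat + h * W s w)%R%:E)
               + (r * L t w)%R%:E))%E.

End Defs.

Definition alpha_hat {R : realType} (n : nat) (alpha : 'I_n.+1 -> R) : R :=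
  \sum_(i < n.+1) (alpha i)^-1.

Definition h_min {R : realType} (n : nat) (hh : 'I_n.+1 -> R) (h0 : R) : R :=
  \big[Order.min/hh ord0]_(i < n.+1) hh i - h0.

Definition r_min {R : realType} (n : nat) (c lam : 'I_n.+1 -> R) : R :=
  \big[Order.min/(c ord0 / lam ord0)]_(i < n.+1) (c i / lam i).

(* Main.v *)
Require Import Defs.
From HB Require Import structures.
From mathcomp Require Import all_boot all_order all_algebra.
From mathcomp Require Import all_classical all_reals all_analysis.
From mathcomp Require Import normal_distribution.
From mathcomp Require Import measurable_realfun.
From mathcomp Require Import ring lra.
Import Order.TTheory GRing.Theory Num.Theory.
Import numFieldNormedType.Exports.
Local Open Scope classical_set_scope.
Local Open Scope ring_scope.


Set Implicit Arguments.
Unset Strict Implicit.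
Unset Printing Implicit Defensive.

Section PM.
Context {R : realType} {d : measure_display} {Omega : measurableType d}.
Variable chi : R -> Omega -> R.

Definition OT (t : R) := g_sigma_algebraType (chi_gen chi t).

Definition PMt (X : R -> Omega -> R) (t : R) :=
  measurable_fun (T := (R * OT t)%type) (`[0, t] `*` setT)
    (fun p : R * OT t => X p.1 p.2).

Lemma measurable_OT t (F : set Omega) :
  (measurable (F : set (OT t))) = chi_filt chi t F.
Proof. by []. Qed.

Lemma prod_OT t :
  @measurable _ (R * OT t)%type =
  <<s [set E : set (R * Omega) | exists A F,
           [/\ measurable A, chi_filt chi t F & E = A `*` F]] >>.
Proof.
rewrite measurable_prod_measurableType; congr (<<s _ >>).
apply/seteqP; split.
  by move=> _ [A mA] [B mB] <-; exists A, B.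
by move=> _ [A [F [mA mF ->]]]; exists A => //; exists F.
Qed.

Lemma mD t : measurable (`[0, t] `*` setT : set (R * OT t)).
Proof. by apply: measurableX => //; exact: measurable_itv. Qed.

Lemma nonantiP X :
  nonanticipating chi X <-> (forall t, 0 <= t -> PMt X t).
Proof.
have E t B : `[0, t] `*` setT `&` (fun p : R * OT t => X p.1 p.2) @^-1` B =
   [set p : R * Omega | 0 <= p.1 <= t /\ B (X p.1 p.2)].
  apply/seteqP; split => [[s w] [[/= + _] /= Bx]|[s w] /= [st Bx]].
    by rewrite in_itv /=.
  by split => //; split => //=; rewrite in_itv.
split => [H t t0 _ B mB|H t t0 B mB].
  by rewrite E prod_OT; exact: H.
by rewrite -prod_OT -E; apply: (H t t0) => //; exact: mD.
Qed.


Section closure.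
Variable t : R.
Implicit Types X Y : R -> Omega -> R.

Lemma PMt_eq X Y : (forall s w, 0 <= s <= t -> X s w = Y s w) ->
  PMt X t -> PMt Y t.
Proof.
move=> XY; apply: eq_measurable_fun => -[s w]; rewrite inE /= => -[+ _].
by rewrite in_itv /= => /XY.
Qed.

Lemma PMt_add X Y : PMt X t -> PMt Y t -> PMt (fun s w => X s w + Y s w) t.
Proof. exact: measurable_realfun.measurable_funD. Qed.

Lemma PMt_scale k X : PMt X t -> PMt (fun s w => k * X s w) t.
Proof. by move=> mX; apply: measurable_realfun.measurable_funM => //; exact: measurable_cst. Qed.

Lemma PMt_cst k : PMt (fun _ _ => k) t.
Proof. exact: measurable_cst. Qed.

Lemma PMt_sum (I : Type) (r : seq I) (P : pred I) (X : I -> R -> Omega -> R) :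
  (forall i, PMt (X i) t) ->
  PMt (fun s w => \sum_(i <- r | P i) X i s w) t.
Proof.
move=> mX; rewrite /PMt.
have -> : (fun p : R * OT t => \sum_(i <- r | P i) X i p.1 p.2) =
  (fun p => \sum_(i <- r) (if P i then X i p.1 p.2 else 0)).
  by apply: funext => p; rewrite big_mkcond.
apply: measurable_sum => i; case: (P i); [exact: mX|exact: measurable_cst].
Qed.

Lemma PMt_lim (Xn : nat -> R -> Omega -> R) X :
  (forall k, PMt (Xn k) t) ->
  (forall s w, 0 <= s <= t -> (fun k => Xn k s w) @ \oo --> X s w) -> PMt X t.
Proof.
move=> mX cX; apply: (@measurable_realfun.measurable_fun_cvg _ _ _ _
   (fun k (p : R * OT t) => Xn k p.1 p.2)) => // -[s w] /= [+ _].
by rewrite in_itv /=; exact: cX.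
Qed.

End closure.

End PM.


Set Implicit Arguments.
Unset Strict Implicit.
Unset Printing Implicit Defensive.

Lemma within_seq {R : realType} (f : R -> R) (A : set R) x (u : nat -> R) :
  {within A, continuous f} -> A x -> (forall m, A (u m)) ->
  u @ \oo --> x -> (fun m => f (u m)) @ \oo --> f x.
Proof.
move=> /subspace_continuousP cf Ax uA ux.
apply: (cvg_comp _ _ _ (cf x Ax)) => P /=; rewrite nbhs_simpl => Pn.
move: (ux _ Pn) => /= [N _ HN]; exists N => // m Nm /=.
by apply: (HN m Nm); exact: uA.
Qed.

Section cara.
Context {R : realType} {d : measure_display} {Omega : measurableType d}.
Variable chi : R -> Omega -> R.
Implicit Types X Y : R -> Omega -> R.

Lemma PMt_T X t : measurable_fun (T := (R * OT chi t)%type) setT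
   (fun p : R * OT chi t => X p.1 p.2) -> PMt chi X t.
Proof. by move=> mX; apply: (measurable_funS _ _ mX). Qed.

Lemma PMt_snd X t u : measurable_fun (T := OT chi t) setT (X u : OT chi t -> R) ->
  PMt chi (fun _ w => X u w) t.
Proof. by move=> mX; apply: PMt_T; exact: (measurableT_comp mX measurable_snd). Qed.

Lemma PMt_indic t (A : set R) : measurable A -> PMt chi (fun s _ => (\1_A s : R)) t.
Proof.
move=> mA; apply: PMt_T.
apply: (@measurableT_comp _ _ _ _ _ _ (\1_A : R -> R) _ fst).
  exact: measurable_realfun.measurable_indic.
exact: measurable_fst.
Qed.

Lemma PMt_mul X Y t : PMt chi X t -> PMt chi Y t -> PMt chi (fun s w => X s w * Y s w) t.
Proof. exact: measurable_realfun.measurable_funM. Qed.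

Lemma PMt_cont X t : 0 <= t ->
  (forall u, 0 <= u <= t -> measurable_fun (T := OT chi t) setT (X u : OT chi t -> R)) ->
  (forall w, {within `[0, t], continuous (fun u => X u w)}) -> PMt chi X t.
Proof.
move=> t0 mX cX.
have [t00|tpos] : t = 0 \/ 0 < t by rewrite le_eqVlt in t0; case/predU1P: t0; [left|right].
  subst t; apply: (@PMt_eq _ _ _ _ _ (fun _ w => X 0 w)).
    by move=> s w s0; have -> // : s = 0 by apply/eqP; rewrite eq_le andbC.
  by apply: PMt_snd; apply: mX; rewrite lexx.
pose c (m : nat) := m.+1%:R / t.
have c0 m : 0 < c m by rewrite divr_gt0.
pose g (m j : nat) := j%:R / c m.
pose Xn m s w := \sum_(j < m.+2) \1_(`[g m j, g m j.+1[ : set R) s * X (g m j) w.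
apply: (@PMt_lim _ _ _ _ _ Xn).
  move=> m; apply: PMt_sum => j; apply: PMt_mul.
    by apply: PMt_indic; exact: measurable_itv.
  apply: PMt_snd; apply: mX; rewrite /g divr_ge0 ?(ltW (c0 m)) //=.
  rewrite ler_pdivrMr // /c mulrCA divff ?gt_eqF // mulr1 ler_nat.
  by rewrite -ltnS.
move=> s w /andP[s0 st].
pose j0 m := Num.truncn (s * c m).
have sI m (j : nat) : (s \in (`[g m j, g m j.+1[%classic : set R)) = (j%:R <= s * c m < j.+1%:R).
  by rewrite mem_setE in_itv /= /g ler_pdivrMr // ltr_pdivlMr.
have j0lt m : (j0 m < m.+2)%N.
  rewrite ltnS /j0 Num.Theory.truncn_le_nat.
  apply: (le_lt_trans (y := t * c m)); first by rewrite ler_pM2r.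
  by rewrite /c mulrCA divff ?mulr1 ?ltr_nat ?gt_eqF.
have XnE m : Xn m s w = X (g m (j0 m)) w.
  rewrite /Xn (bigD1 (Ordinal (j0lt m))) //= big1 ?addr0.
    by rewrite indicE sI truncn_itv ?mul1r // mulr_ge0 // ltW.
  move=> j neq; rewrite indicE; case: (boolP (s \in _)) => [|_]; last by rewrite mul0r.
  rewrite sI => /truncn_def jE; move: neq.
  by rewrite -(inj_eq val_inj) /= /j0 jE eqxx.
have -> : (fun k => Xn k s w) = (fun k => X (g k (j0 k)) w).
  by apply: funext => k; exact: XnE.
have jI k := truncn_itv (mulr_ge0 s0 (ltW (c0 k))).
have ule k : g k (j0 k) <= s.
  by rewrite /g ler_pdivrMr //; case/andP: (jI k).
have ugt k : s - t * harmonic k <= g k (j0 k).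
  have : s < (j0 k).+1%:R / c k by rewrite ltr_pdivlMr //; case/andP: (jI k).
  rewrite -natr1 mulrDl /g /harmonic /c invf_div mul1r => /ltW.
  by rewrite lerBlDr.
apply: (@within_seq _ (fun u => X u w) `[0, t]%classic s).
- exact: cX.
- by rewrite /= in_itv /= s0 st.
- move=> k; rewrite /= in_itv /= divr_ge0 ?(ltW (c0 k)) //=.
  exact: le_trans (ule k) st.
- apply: (@squeeze_cvgr _ _ _ _ (fun k => s - t * harmonic k) (fun _ => s)).
    by apply: nearW => k; rewrite ule ugt.
  have : (fun k => s - t * harmonic k) @ \oo --> s - t * 0.
    apply: cvgB; first exact: cvg_cst.
    by apply: cvgM; [exact: cvg_cst|exact: cvg_harmonic].
  by rewrite mulr0 subr0.
  exact: cvg_cst.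
Qed.

End cara.


Set Implicit Arguments.
Unset Strict Implicit.
Unset Printing Implicit Defensive.

Section pintPM.
Context {R : realType} {d : measure_display} {Omega : measurableType d}.
Variable chi : R -> Omega -> R.
Implicit Types X Y : R -> Omega -> R.

Lemma pint_meas X t u : 0 <= u <= t -> PMt chi X t ->
  (forall w, (@lebesgue_measure R).-integrable `[0, u] (fun s => (X s w)%:E)) ->
  measurable_fun (T := OT chi t) setT (pint X u : OT chi t -> R).
Proof.
move=> /andP[u0 ut] mX iX.
pose Xu : (R * OT chi t)%type -> R := (fun p : (R * OT chi t)%type => X p.1 p.2) \_ (`[0, u] `*` setT).
have mXu : measurable_fun setT Xu.
  have mDu : measurable (`[0, u] `*` setT : set (R * OT chi t)%type).
    by apply: measurableX => //; exact: measurable_itv.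
  apply/(measurable_restrictT _ mDu).
  have sub : (`[0, u] `*` setT : set (R * OT chi t)%type) `<=` `[0, t] `*` setT.
    move=> [s w] [/= + _]; rewrite /= in_itv /= => /andP[s0 su].
    by split => //=; rewrite in_itv /= s0 (le_trans su ut).
  exact: (measurable_funS (@mD _ _ _ chi t) sub mX).
have mXuE : measurable_fun (T := (R * OT chi t)%type) (U := \bar R) setT (EFin \o Xu).
  by apply/measurable_EFinP.
have mp := measurable_funepos mXuE.
have mn := measurable_funeneg mXuE.
have mp' : measurable_fun (T := (measurableTypeR R * OT chi t)%type) setT
  ((EFin \o Xu)^\+)%E := mp.
have mn' : measurable_fun (T := (measurableTypeR R * OT chi t)%type) setT
  ((EFin \o Xu)^\-)%E := mn.
have Gp := @measurable_fun_fubini_tonelli_G _ _ _ (OT chi t) R lebesgue_measure _ mp'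
  (fun x => funepos_ge0 _ x).
have Gn := @measurable_fun_fubini_tonelli_G _ _ _ (OT chi t) R lebesgue_measure _ mn'
  (fun x => funeneg_ge0 _ x).
have -> : (pint X u : OT chi t -> R) = fine \o (fubini_G lebesgue_measure (EFin \o Xu)^\+
   \- fubini_G lebesgue_measure (EFin \o Xu)^\-)%E.
  apply: funext => w; rewrite /pint /Rintegral integralE.
  have inX s : ((s, w) \in (`[0, u] `*` setT : set (R * OT chi t)%type)) =
      (s \in (`[0, u]%classic : set R)).
    by apply/idP/idP => /set_mem; [case => + _|] => H; apply/mem_set.
  congr (fine (_ - _)); rewrite /fubini_G integral_mkcond; apply: eq_integral => s _;
    rewrite /Xu /patch !(funeposE, funenegE) /comp inX; case: ifPn => // _.
  - by rewrite /point /= maxxx.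
  - by rewrite /point /= oppr0 maxxx.
exact: (measurableT_comp (fine_measurable measurableT) (emeasurable_funB Gp Gn)).
Qed.

Lemma PMt_pint X t : 0 <= t -> PMt chi X t ->
  (forall w, (@lebesgue_measure R).-integrable `[0, t] (fun s => (X s w)%:E)) ->
  PMt chi (pint X) t.
Proof.
move=> t0 mX iX; apply: PMt_cont => //.
  move=> u /andP[u0 ut]; apply: pint_meas => //; first by rewrite u0.
  move=> w; apply: integrableS (iX w) => //.
  by apply: subset_itvl; rewrite bnd_simp.
move=> w; exact: (parameterized_integral_continuous t0 (iX w)).
Qed.

End pintPM.


Set Implicit Arguments.
Unset Strict Implicit.
Unset Printing Implicit Defensive.

Lemma Rint_pow (R : realType) (k : nat) (s : R) : 0 <= s ->
  \int[lebesgue_measure]_(x in `[0, s]) (x ^+ k) = s ^+ k.+1 / k.+1%:R.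
Proof.
rewrite le_eqVlt => /predU1P[<-|s0].
  by rewrite set_itv1 Rintegral_set1 expr0n mul0r.
rewrite /Rintegral (@continuous_FTC2 _ _ (fun x => x ^+ k.+1 / k.+1%:R)) //=.
- by rewrite expr0n mul0r subr0.
- by apply: continuous_in_subspaceT => x _; exact: exprn_continuous.
- split.
  + by move=> x _; apply: derivableM => //; exact: exprn_derivable.
  + apply: cvg_at_right_filter; apply: cvgM; last exact: cvg_cst.
    exact: exprn_continuous.
  + apply: cvg_at_left_filter; apply: cvgM; last exact: cvg_cst.
    exact: exprn_continuous.
- move=> x _; rewrite derive1Mr //; last exact: exprn_derivable.
  by rewrite exp_derive1 /= mulrAC divff ?mul1r // pnatr_eq0.
Qed.


Set Implicit Arguments.
Unset Strict Implicit.
Unset Printing Implicit Defensive.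

Section aux.
Context {R : realType}.
Local Notation mu := (@lebesgue_measure R).

Lemma cont_int (f : R -> R) T :
  {within `[0, T], continuous f} -> mu.-integrable `[0, T] (EFin \o f).
Proof.
move=> cf; apply: continuous_compact_integrable => //.
exact: segment_compact.
Qed.

Lemma int_scale (f : R -> R) (A : set (measurableTypeR R)) c : measurable A ->
  mu.-integrable A (EFin \o f) -> mu.-integrable A (EFin \o (fun x => c * f x)).
Proof.
move=> mA iF; have := integrableZl mA c iF.
by apply: eq_integrable => // x _.
Qed.

Lemma Rint_mono (f : R -> R) s t : 0 <= s <= t ->
  mu.-integrable `[0, t] (EFin \o f) -> (forall x, 0 <= f x) ->
  \int[mu]_(x in `[0, s]) f x <= \int[mu]_(x in `[0, t]) f x.
Proof.
move=> /andP[s0 st] iF f0; rewrite -subr_ge0.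
rewrite (@Rintegral_itvB _ f (BLeft 0) (BRight t) s) //.
exact: Rintegral_ge0.
Qed.

End aux.

Section picard.
Context {R : realType} {d : measure_display} {Omega : measurableType d}.
Local Notation mu := (@lebesgue_measure R).
Variable chi : R -> Omega -> R.
Variables (eta : R) (Y W : R -> Omega -> R).
Hypothesis eta0 : 0 <= eta.
Hypothesis iW : loc_integrable W.
Hypothesis WE : forall s w, 0 <= s -> W s w = Y s w - eta * pint W s w.

Fixpoint Dk (k : nat) : R -> Omega -> R :=
  match k with
  | 0 => pint (fun s w => eta * W s w)
  | k'.+1 => pint (fun s w => - eta * Dk k' s w)
  end.

Lemma Dk_cont k w T : 0 <= T -> {within `[0, T], continuous (fun s => Dk k s w)}.
Proof.
move=> T0; elim: k => [|k IH] /=.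
  exact: (parameterized_integral_continuous T0
    (int_scale eta (measurable_itv _) (iW w T0))).
exact: (parameterized_integral_continuous T0
    (int_scale (- eta) (measurable_itv _) (cont_int IH))).
Qed.

Lemma Dk_int k w T : 0 <= T -> mu.-integrable `[0, T] (EFin \o (fun s => Dk k s w)).
Proof. by move=> T0; apply: cont_int; exact: Dk_cont. Qed.

Variable t : R.
Hypothesis t0 : 0 <= t.

Let M w := \int[mu]_(x in `[0, t]) `|W x w|.

Lemma Dk_bound k w s : 0 <= s <= t ->
  `|Dk k s w| <= M w * eta ^+ k.+1 * (s ^+ k / k`!%:R).
Proof.
elim: k s => [|k IH] s /andP[s0 st] /=.
  rewrite expr0 fact0 divr1 mulr1 expr1 /pint.
  have iWs : mu.-integrable `[0, s] (EFin \o (fun x => W x w)).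
    by apply: integrableS (iW w t0) => //; apply: subset_itvl; rewrite bnd_simp.
  apply: (le_trans (le_normr_Rintegral _ (int_scale eta (measurable_itv _) iWs))) => //.
  under eq_Rintegral do rewrite normrM (ger0_norm eta0).
  rewrite RintegralZl //; last exact: integrable_norm.
  rewrite mulrC ler_wpM2r //.
  apply: (Rint_mono (f := fun x => `|W x w|)); first by rewrite s0 st.
    exact: integrable_norm (iW w t0).
  by move=> x.
rewrite /pint.
have iD : mu.-integrable `[0, s] (EFin \o (fun x => - eta * Dk k x w)).
  exact: int_scale (-eta) (measurable_itv _) (Dk_int k w s0).
apply: (le_trans (le_normr_Rintegral _ iD)) => //.
pose C := eta * (M w * eta ^+ k.+1 / k`!%:R).
have cX : {within `[0, s], continuous (fun x : R => x ^+ k)}.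
  exact: continuous_subspaceT (@exprn_continuous _ k).
apply: (@le_trans _ _ (\int[mu]_(x in `[0, s]) (C * x ^+ k))).
  apply: le_Rintegral => //.
  - exact: integrable_norm iD.
  - exact: int_scale C (measurable_itv _) (cont_int cX).
  move=> x; rewrite /= in_itv /= => /andP[x0 xs].
  rewrite normrM normrN (ger0_norm eta0).
  apply: (le_trans (ler_wpM2l eta0 (IH x _))); first by rewrite x0 (le_trans xs st).
  by rewrite /C le_eqVlt; apply/orP; left; apply/eqP; field; rewrite pnatr_eq0 -lt0n fact_gt0.
rewrite RintegralZl //; last exact: cont_int cX.
rewrite Rint_pow // /C factS natrM.
rewrite (exprS eta k.+1) le_eqVlt; apply/orP; left; apply/eqP; field.
by rewrite nat1r !pnatr_eq0 -!lt0n fact_gt0.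
Qed.

Lemma W_PM : PMt chi Y t -> PMt chi W t.
Proof.
move=> PY.
pose Wk k s w := W s w + Dk k s w.
have iWs w s : 0 <= s -> mu.-integrable `[0, s] (EFin \o (fun x => W x w)).
  by move=> s0; exact: iW.
have PWk k : PMt chi (Wk k) t.
  elim: k => [|k IH].
    apply: (PMt_eq (X := Y)) => // s w /andP[s0 _].
    rewrite /Wk /= /pint RintegralZl //; last exact: iWs.
    by rewrite (WE w s0) /pint subrK.
  apply: (PMt_eq (X := fun s w => Y s w + (- eta) * pint (Wk k) s w)).
    move=> s w /andP[s0 _].
    rewrite /Wk /= /pint RintegralZl //; last exact: Dk_int.
    rewrite RintegralD //; [|exact: iWs|exact: Dk_int].
    by rewrite (WE w s0) /pint; ring.
  apply: PMt_add => //; apply: PMt_scale; apply: PMt_pint => // w.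
  have mI : measurable (`[0, t]%classic : set (measurableTypeR R)).
    exact: measurable_itv.
  have := integrableD mI (iW w t0) (Dk_int k w t0).
  by apply: eq_integrable => // x _ /=; rewrite EFinD.
apply: (PMt_lim (Xn := Wk)) => // s w /andP[s0 st].
rewrite -[X in _ --> X]addr0; apply: cvgD; first exact: cvg_cst.
pose b k := M w * eta * exp_coeff (eta * s) k.
have bE k : M w * eta ^+ k.+1 * (s ^+ k / k`!%:R) = b k.
  by rewrite /b /exp_coeff /= exprMn exprSr; ring.
have b0 : b @ \oo --> 0.
  rewrite -(mulr0 (M w * eta)); apply: cvgM; first exact: cvg_cst.
  exact: cvg_series_cvg_0 (is_cvg_series_exp_coeff _).
apply: (@squeeze_cvgr _ _ _ _ (fun k => - b k) b).
- apply: nearW => k; rewrite -ler_norml -bE; apply: Dk_bound.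
  by rewrite s0 st.
- by rewrite -oppr0; exact: cvgN.
- exact: b0.
Qed.

End picard.


Set Implicit Arguments.
Unset Strict Implicit.
Unset Printing Implicit Defensive.

Section main1.
Context {R : realType} {d : measure_display} {Omega : measurableType d}.
Local Notation mu := (@lebesgue_measure R).
Variable chi : R -> Omega -> R.

Lemma chi_PM (P : probability Omega R) a sigma t : brownian_motion P chi a sigma ->
  0 <= t -> PMt chi chi t.
Proof.
case=> _ _ cchi _ _ t0; apply: PMt_cont => //.
  move=> u /andP[u0 ut] _ B mB; rewrite setTI.
  by apply: sub_sigma_algebra; exists u, B; split => //; rewrite u0.
move=> w; apply: continuous_subspaceW (cchi w).
by move=> s /=; rewrite in_itv /= => /andP[].
Qed.

Lemma nonanti_W (P : probability Omega R) a sigma eta theta L W :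
  brownian_motion P chi a sigma -> 0 <= eta ->
  ewf_admissible chi eta theta L W -> nonanticipating chi W.
Proof.
move=> bm eta0 [[ntheta nL] [iW itheta] WE _ _].
apply/nonantiP => t t0.
pose Y := fun s w => (chi s w + (-1) * pint theta s w) + L s w.
apply: (W_PM (Y := Y) (eta := eta)) => //.
- by move=> s w s0; rewrite (WE w s s0) /Y; ring.
- apply: PMt_add; last exact: (proj1 (nonantiP chi L) nL t t0).
  apply: PMt_add; first exact: chi_PM bm t0.
  apply: PMt_scale; apply: PMt_pint => //.
    exact: (proj1 (nonantiP chi theta) ntheta t t0).
  by move=> w; exact: itheta.
Qed.

End main1.


Set Implicit Arguments.
Unset Strict Implicit.
Unset Printing Implicit Defensive.

Lemma bigmin_arg {R : realType} n (F : 'I_n.+1 -> R) :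
  exists i, \big[Order.min/F ord0]_(j < n.+1) F j = F i.
Proof.
apply: (big_ind (fun y => exists i, y = F i)) => [|x y [i ->] [j ->]|i _].
- by exists ord0.
- by case: (lerP (F i) (F j)) => h; [exists i|exists j].
- by exists i.
Qed.

Section helpers.
Context {R : realType} {d : measure_display} {Omega : measurableType d}.
Local Notation mu := (@lebesgue_measure R).
Variable chi : R -> Omega -> R.

Lemma nonanti_sum (I : Type) (r : seq I) (Q : pred I) (X : I -> R -> Omega -> R) :
  (forall i, nonanticipating chi (X i)) ->
  nonanticipating chi (fun s w => \sum_(i <- r | Q i) X i s w).
Proof.
move=> nX; apply/nonantiP => t t0; apply: PMt_sum => i.
exact: (proj1 (nonantiP chi _) (nX i) t t0).
Qed.

Lemma nonanti_scale k (X : R -> Omega -> R) : nonanticipating chi X ->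
  nonanticipating chi (fun s w => k * X s w).
Proof.
move=> nX; apply/nonantiP => t t0; apply: PMt_scale.
exact: (proj1 (nonantiP chi _) nX t t0).
Qed.

Lemma nonanti_cst k : nonanticipating chi (fun _ _ => k).
Proof. by apply/nonantiP => t t0; exact: PMt_cst. Qed.

Lemma loc_int_sum (I : Type) (r : seq I) (Q : pred I) (X : I -> R -> Omega -> R) :
  (forall i, loc_integrable (X i)) ->
  loc_integrable (fun s w => \sum_(i <- r | Q i) X i s w).
Proof.
move=> iX w t t0.
have mI : measurable (`[0, t]%classic : set (measurableTypeR R)).
  exact: measurable_itv.
have := integrable_sum mI r (P := Q) (h := fun i s => (X i s w)%:E) (fun i _ => iX i w t t0).
move=> H; apply: (eq_integrable mI _ _ _ H) => x _ /=; by rewrite sumEFin.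
Qed.

Lemma loc_int_scale k (X : R -> Omega -> R) : loc_integrable X ->
  loc_integrable (fun s w => k * X s w).
Proof.
move=> iX w t t0; exact: int_scale k (measurable_itv _) (iX w t t0).
Qed.

End helpers.

Section ineq.
Context {R : realType}.

Lemma le_integral_nm d (T : measurableType d) (m : measure T R) (D : set T)
    (f g : T -> \bar R) :
  (forall x, D x -> (0 <= f x)%E) -> (forall x, D x -> (f x <= g x)%E) ->
  (\int[m]_(x in D) f x <= \int[m]_(x in D) g x)%E.
Proof.
move=> f0 fg; rewrite !ge0_integralE //; last first.
  by move=> x Dx; exact: le_trans (f0 x Dx) (fg x Dx).
apply: le_ereal_sup => _ [h hf <-]; exists h => //= x.
apply: le_trans (hf x) _; rewrite /patch; case: ifPn => // /set_mem Dx.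
exact: fg.
Qed.

Lemma limsup_le (f g : R -> \bar R) : (forall t, 0 < t -> (f t <= g t)%E) ->
  (limsup_oo f <= limsup_oo g)%E.
Proof.
move=> fg; rewrite /limsup_oo !limf_esupE.
apply: le_ereal_inf_tmp => _ [V FV <-].
have FV' : pinfty_nbhs R (V `&` [set t | 0 < t]).
  apply: filterI => //; exact: nbhs_pinfty_gt.
apply: le_trans (ereal_inf_lbound _) _.
  by exists (V `&` [set t | 0 < t]).
apply: ge_ereal_sup => _ [t [Vt t0] <-].
apply: le_trans (fg t t0) _; apply: ereal_sup_ubound.
by exists t.
Qed.

Lemma cauchy_schwarz n (alpha z : 'I_n.+1 -> R) : (forall i, 0 < alpha i) ->
  (\sum_i z i) ^+ 2 / (\sum_i (alpha i)^-1) <= \sum_i alpha i * z i ^+ 2.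
Proof.
move=> a0; set A := \sum_i (alpha i)^-1; set S := \sum_i z i.
have A0 : 0 < A.
  by rewrite /A (bigD1 ord0) //= ltr_wpDr ?invr_gt0 ?sumr_ge0 // => i _; rewrite invr_ge0 ltW.
pose q := S / A.
have : 0 <= \sum_i alpha i * (z i - q / alpha i) ^+ 2.
  by apply: sumr_ge0 => i _; rewrite mulr_ge0 ?sqr_ge0 // ltW.
have E i : alpha i * (z i - q / alpha i) ^+ 2 =
    alpha i * z i ^+ 2 - 2 * q * z i + q ^+ 2 * (alpha i)^-1.
  by field; rewrite gt_eqF.
rewrite (eq_bigr _ (fun i _ => E i)) big_split /= big_split /= sumrN -!mulr_sumr.
rewrite -/S -/A /q => H.
rewrite -subr_ge0; apply: le_trans H _; rewrite le_eqVlt; apply/orP; left; apply/eqP.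
by field; rewrite gt_eqF.
Qed.

End ineq.


Unset Implicit Arguments.

Theorem proposition2 (R : realType) (d : measure_display) (Omega : measurableType d)
    (P : probability Omega R) (n : nat) (eta : R) (lam alpha : 'I_n.+1 -> R)
    (h0 : R) (hh c : 'I_n.+1 -> R) (chi : R -> Omega -> R) (a sigma : R) :
  0 < eta ->
  (forall i, 0 < lam i) ->
  (forall i, 0 < alpha i) ->
  0 <= h0 ->
  (forall i, h0 < hh i) ->
  (forall i, 0 <= c i) ->
  0 < sigma ->
  brownian_motion P chi a sigma ->
  (forall theta L W : R -> Omega -> R,
      ewf_admissible chi eta theta L W ->
      exists Z U zeta : 'I_n.+1 -> R -> Omega -> R,
        rbcp_admissible chi eta lam Z U zeta /\
        rbcp_cost P alpha hh h0 c Z U zeta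
        = ewf_cost P (alpha_hat alpha) (h_min hh h0) (r_min c lam) theta L W)
  /\
  (forall Z U zeta : 'I_n.+1 -> R -> Omega -> R,
      rbcp_admissible chi eta lam Z U zeta ->
      exists theta L W : R -> Omega -> R,
        ewf_admissible chi eta theta L W /\
        (ewf_cost P (alpha_hat alpha) (h_min hh h0) (r_min c lam) theta L W
         <= rbcp_cost P alpha hh h0 c Z U zeta)%E).
Proof.
move=> eta0 lam0 alpha0 h00 hh0 c0 sig0 bm.
pose ahat := alpha_hat alpha.
have ahat0 : 0 < ahat.
  by rewrite /ahat /alpha_hat (bigD1 ord0) //= ltr_wpDr ?invr_gt0 ?sumr_ge0 // => i _;
    rewrite invr_ge0 ltW.
have [istar hmin] := bigmin_arg hh.
have [jstar rmin] := bigmin_arg (fun i => c i / lam i).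
have hE : h_min hh h0 = hh istar - h0 by rewrite /h_min hmin.
have rE : r_min c lam = c jstar / lam jstar by exact: rmin.
split.
- move=> theta L W adm.
  have nW := nonanti_W bm (ltW eta0) adm.
  case: (adm) => [[ntheta nL] [iW itheta] WE W0 [L0 Lmono]].
  pose Z := fun i : 'I_n.+1 => if i == istar then W else (fun _ _ => 0).
  pose U := fun i : 'I_n.+1 => if i == jstar then (fun s w => (lam jstar)^-1 * L s w)
                                else (fun _ _ => 0).
  pose zeta := fun (i : 'I_n.+1) s w => ((alpha i)^-1 / ahat) * theta s w.
  exists Z, U, zeta.
  have sumZ : (fun s w => \sum_(i < n.+1) Z i s w) = W.
    apply: funext => s; apply: funext => w.
    by rewrite (bigD1 istar) //= /Z eqxx big1 ?addr0 // => i /negbTE ->.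
  have sumU s w : \sum_(i < n.+1) lam i * U i s w = L s w.
    rewrite (bigD1 jstar) //= /U eqxx big1 ?addr0.
      by rewrite mulrA divff ?mul1r // gt_eqF.
    by move=> i /negbTE ->; rewrite mulr0.
  have sumz : (fun s w => \sum_(i < n.+1) zeta i s w) = theta.
    apply: funext => s; apply: funext => w.
    by rewrite /zeta -mulr_suml -mulr_suml divff ?mul1r // gt_eqF.
  split.
  + split.
    * split; [|split].
      - by move=> i; rewrite /Z; case: eqP => _; [exact: nW|exact: nonanti_cst].
      - move=> i; rewrite /U; case: eqP => _; [exact: nonanti_scale|exact: nonanti_cst].
      - by move=> i; exact: nonanti_scale.
    * split; first by rewrite sumZ.
      by move=> i; exact: loc_int_scale.
    * move=> w t t0; rewrite sumZ sumz (sumU t w).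
      have -> : \sum_(i < n.+1) Z i t w = W t w by rewrite -sumZ.
      exact: WE.
    * by move=> i w t t0; rewrite /Z; case: eqP => _ //=; exact: W0.
    * move=> i; rewrite /U; case: eqP => _; split => //=.
        by move=> w; rewrite L0 mulr0.
      move=> w s t s0 st; apply: ler_wpM2l; [by rewrite invr_ge0 ltW|exact: Lmono].
  + rewrite /rbcp_cost /ewf_cost; congr limsup_oo; apply: funext => t.
    congr (_ * _)%E; apply: eq_integral => w _; congr (_ + _)%E.
      apply: eq_integral => s _; congr EFin; congr (_ + _).
        rewrite (eq_bigr (fun i => (alpha i)^-1 * (theta s w ^+ 2 / ahat ^+ 2))).
          by rewrite -mulr_suml -/(alpha_hat alpha) -/ahat; field; rewrite gt_eqF.
        by move=> i _; rewrite /zeta; field; rewrite (gt_eqF (alpha0 i)) (gt_eqF ahat0).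
      rewrite (bigD1 istar) //= /Z eqxx big1 ?addr0 ?hE //.
      by move=> i /negbTE ->; rewrite mulr0.
    congr EFin; rewrite (bigD1 jstar) //= /U eqxx big1 ?addr0 ?rE.
      by rewrite mulrA.
    by move=> i /negbTE ->; rewrite mulr0.
- move=> Z U zeta [[nZ [nU nzeta]] [iW izeta] eqW Z0 Umon].
  exists (fun s w => \sum_(i < n.+1) zeta i s w),
    (fun s w => \sum_(i < n.+1) lam i * U i s w), (fun s w => \sum_(i < n.+1) Z i s w).
  have U0 i w t : 0 <= t -> 0 <= U i t w.
    by move=> t0; rewrite -((proj1 (Umon i)) w); exact: (proj2 (Umon i)).
  split.
  + split.
    * split; first exact: nonanti_sum.
      by apply: nonanti_sum => i; exact: nonanti_scale.
    * by split => //; exact: loc_int_sum.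
    * exact: eqW.
    * by move=> w t t0; apply: sumr_ge0 => i _; exact: Z0.
    * split.
        by move=> w; rewrite big1 // => i _; rewrite (proj1 (Umon i)) mulr0.
      move=> w s t s0 st; apply: ler_sum => i _; apply: ler_wpM2l; first exact: ltW.
      exact: (proj2 (Umon i)).
  + have hle i : h_min hh h0 <= hh i - h0 by rewrite /h_min lerD2r; exact: bigmin_le.
    have rle i : r_min c lam <= c i / lam i by exact: bigmin_le.
    have h0' : 0 <= h_min hh h0 by rewrite hE subr_ge0 ltW.
    have r0 : 0 <= r_min c lam by rewrite rE divr_ge0 // ltW.
    apply: limsup_le => t t0.
    apply: lee_wpmul2l; first by rewrite lee_fin invr_ge0 ltW.
    apply: le_integral_nm => w _.
      apply: adde_ge0; last first.
        rewrite lee_fin; apply: mulr_ge0 => //; apply: sumr_ge0 => i _.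
        by apply: mulr_ge0; [exact: ltW|exact: U0 (ltW t0)].
      apply: integral_ge0 => s; rewrite /= in_itv /= => /andP[s0 _].
      rewrite lee_fin; apply: addr_ge0.
        by apply: divr_ge0; [exact: sqr_ge0|exact: ltW].
      by apply: mulr_ge0 => //; apply: sumr_ge0 => i _; exact: Z0.
    apply: leeD; last first.
      rewrite lee_fin mulr_sumr; apply: ler_sum => i _; rewrite mulrA.
      apply: ler_wpM2r; first exact: U0 (ltW t0).
      by rewrite -ler_pdivlMr.
    apply: le_integral_nm => s; rewrite /= in_itv /= => /andP[s0 _].
      rewrite lee_fin; apply: addr_ge0.
        by apply: divr_ge0; [exact: sqr_ge0|exact: ltW].
      by apply: mulr_ge0 => //; apply: sumr_ge0 => i _; exact: Z0.
    rewrite lee_fin; apply: lerD; first exact: cauchy_schwarz.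
    rewrite mulr_sumr; apply: ler_sum => i _; apply: ler_wpM2r => //; exact: Z0.
Qed.
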